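(* Let $\beta_1>\beta_0>0$, $n\ge2$ and $\varepsilon>0$. Then there exist $C,\alpha>0$ such that for all $t\ge0$ each of the probabilities $\mathbb{P}_{\mathbf 0}(\tilde X^n_t(n)\ge(n\beta_0+\varepsilon)t)$, $\mathbb{P}_{\mathbf 0}\big(\tilde X^n_t(n)\ge(\frac{(n-1)\beta_1+\beta_0}{n}+\varepsilon)t\big)$ and $\mathbb{P}_{\mathbf 0}(\tilde X^n_t(n)\ge(4\sqrt2\sqrt{\beta_1\beta_0}+\varepsilon)t)$ is at most $Ce^{-\alpha t}$. In particular $\tilde d_n(\beta_1)\le\min\big(n\beta_0,\frac{(n-1)\beta_1+\beta_0}{n},4\sqrt2\sqrt{\beta_1\beta_0}\big)$.
   Context: For $m\ge1$: for $x\in\mathbb{N}^m$, with zero boundary convention $x(0)=x(m+1)=0$, let $V_j(x)=\mathbf 1_{\{x(j-1)>x(j)\}}+\mathbf 1_{\{x(j+1)>x(j)\}}\in\{0,1,2\}$. $\tilde X^m$ denotes the continuous-time Markov chain on $\mathbb{N}^m$ jumping from $x$ to $x+e_j$ at rate $\tilde\beta_{V_j(x)}$ where $(\tilde\beta_0,\tilde\beta_1,\tilde\beta_2)=(\beta_0,\beta_1,\beta_1)$, with no other transitions; $\mathbb{P}_{\mathbf 0}$ is its law from the zero configuration. $\tilde d_m(\beta_1)=\inf\{d>0:\ \exists C,\alpha>0,\ \forall t\ge0,\ \mathbb{P}_{\mathbf 0}(\tilde X^m_t(m)\ge dt)\le Ce^{-\alpha t}\}$. *)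

(* Defs.v *)
From Stdlib Require Import Reals Lra List Arith.
Import ListNotations.
Open Scope R_scope.

(* Configurations x in N^m are functions nat -> nat; only indices 1..m are
   meaningful.  [cget m x i] implements the zero boundary convention
   x(0) = x(m+1) = 0 (and ignores values outside 1..m). *)
Definition cget (m : nat) (x : nat -> nat) (i : nat) : nat :=
  if andb (Nat.leb 1 i) (Nat.leb i m) then x i else 0%nat.

Definition Vj (m : nat) (x : nat -> nat) (j : nat) : nat :=
  ((if Nat.ltb (cget m x j) (cget m x (j - 1)) then 1 else 0)
   + (if Nat.ltb (cget m x j) (cget m x (j + 1)) then 1 else 0))%nat.

Definition rate (b0 b1 : R) (m : nat) (x : nat -> nat) (j : nat) : R :=
  match Vj m x j with O => b0 | _ => b1 end.

Definition upd (x : nat -> nat) (j : nat) : nat -> nat :=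
  fun i => if Nat.eqb i j then S (x i) else x i.

Definition sites (m : nat) : list nat := seq 1 m.

Definition sumR (l : list nat) (f : nat -> R) : R := fold_right Rplus 0 (map f l).

(* Uniformization constant: an upper bound on the total jump rate. *)
Definition Lam (b0 b1 : R) (m : nat) : R := INR m * Rmax b0 b1.

(* Ek m b0 b1 a k x = probability that the uniformized (discrete-time) chain,
   started at x, has coordinate m >= a after k steps. *)
Fixpoint Ek (m : nat) (b0 b1 a : R) (k : nat) (x : nat -> nat) : R :=
  match k with
  | O => if Rle_dec a (INR (cget m x m)) then 1 else 0
  | S k' =>
      sumR (sites m) (fun j => rate b0 b1 m x j / Lam b0 b1 m * Ek m b0 b1 a k' (upd x j))
      + (1 - sumR (sites m) (fun j => rate b0 b1 m x j / Lam b0 b1 m)) * Ek m b0 b1 a k' x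
  end.

Definition zero_conf : nat -> nat := fun _ => 0%nat.

(* Law at time t of the continuous-time chain X~^m started from 0, via
   uniformization: P_0(X~^m_t(m) >= a) = sum_k e^{-Lam t} (Lam t)^k / k! * Ek k 0.
   [ProbGe m b0 b1 t a p] says that this probability equals p. *)
Definition ProbGe (m : nat) (b0 b1 t a p : R) : Prop :=
  infinite_sum
    (fun k => exp (- (Lam b0 b1 m * t)) * (Lam b0 b1 m * t) ^ k / INR (fact k)
              * Ek m b0 b1 a k zero_conf) p.

Definition ProbGe_le (m : nat) (b0 b1 t a bound : R) : Prop :=
  exists p, ProbGe m b0 b1 t a p /\ p <= bound.

(* Main.v *)
Require Import Defs.
From Stdlib Require Import Reals Lra Lia List Arith.
Import ListNotations.
Open Scope R_scope.

Lemma sumR_nil f : sumR [] f = 0.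
Proof. reflexivity. Qed.
Lemma sumR_cons a l f : sumR (a :: l) f = f a + sumR l f.
Proof. reflexivity. Qed.
Lemma sumR_app l1 l2 f : sumR (l1 ++ l2) f = sumR l1 f + sumR l2 f.
Proof. induction l1 as [|a l1 IH]; [rewrite sumR_nil, Rplus_0_l; reflexivity|]. rewrite <- app_comm_cons, !sumR_cons, IH; ring. Qed.
Lemma sumR_ext l f g : (forall j, In j l -> f j = g j) -> sumR l f = sumR l g.
Proof. induction l; intros H; [reflexivity|]. rewrite !sumR_cons. f_equal; [apply H; simpl; auto|]. apply IHl; intros; apply H; simpl; auto. Qed.
Lemma sumR_lin l f g a b : sumR l (fun j => a * f j + b * g j) = a * sumR l f + b * sumR l g.
Proof. induction l; [rewrite !sumR_nil; ring|]. rewrite !sumR_cons, IHl; ring. Qed.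
Lemma sumR_le l f g : (forall j, In j l -> f j <= g j) -> sumR l f <= sumR l g.
Proof. induction l; intros H; [rewrite !sumR_nil; lra|]. rewrite !sumR_cons.
  assert (f a <= g a) by (apply H; simpl; auto). assert (sumR l f <= sumR l g) by (apply IHl; intros; apply H; simpl; auto). lra. Qed.
Lemma sumR_nonneg l f : (forall j, In j l -> 0 <= f j) -> 0 <= sumR l f.
Proof. intros H. replace 0 with (sumR l (fun _ => 0)). apply sumR_le; auto.
  induction l; auto. rewrite sumR_cons, IHl; [ring|]. intros; apply H; simpl; auto. Qed.
Lemma sumR_const_le l f c : (forall j, In j l -> f j <= c) -> sumR l f <= INR (length l) * c.
Proof. induction l; intros H; [rewrite sumR_nil; simpl; lra|]. rewrite sumR_cons.
  change (length (a :: l)) with (S (length l)). rewrite S_INR.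
  assert (f a <= c) by (apply H; simpl; auto). assert (sumR l f <= INR (length l) * c) by (apply IHl; intros; apply H; simpl; auto). lra. Qed.
Lemma sumR_map l h f : sumR (map h l) f = sumR l (fun j => f (h j)).
Proof. induction l; [reflexivity|]. simpl map. rewrite !sumR_cons, IHl; reflexivity. Qed.
Lemma sumR_mono_sub l1 l2 f : (forall j, In j l2 -> 0 <= f j) -> sumR l1 f <= sumR (l1 ++ l2) f.
Proof. intros. rewrite sumR_app. assert (0 <= sumR l2 f) by (apply sumR_nonneg; auto). lra. Qed.
Lemma sumR_exchange (l1 l2 : list nat) (f : nat -> nat -> R) :
  sumR l1 (fun i => sumR l2 (fun j => f i j)) = sumR l2 (fun j => sumR l1 (fun i => f i j)).
Proof. induction l1.
  - rewrite sumR_nil. induction l2; [reflexivity|]. rewrite sumR_cons, <- IHl2, sumR_nil; ring.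
  - rewrite sumR_cons, IHl1. rewrite <- (Rmult_1_l (sumR l2 (fun j => f a j))), <- (Rmult_1_l (sumR l2 (fun j => sumR l1 (fun i => f i j)))).
    rewrite <- sumR_lin. apply sumR_ext; intros. rewrite sumR_cons; ring. Qed.

Lemma rate_cases b0 b1 m x j : (Vj m x j = 0%nat /\ rate b0 b1 m x j = b0) \/ (Vj m x j <> 0%nat /\ rate b0 b1 m x j = b1).
Proof. unfold rate. destruct (Vj m x j); [left|right]; auto. Qed.
Lemma rate_bounds b0 b1 m x j : 0 <= b0 <= b1 -> 0 <= rate b0 b1 m x j <= b1.
Proof. intros. destruct (rate_cases b0 b1 m x j) as [[_ ->]|[_ ->]]; lra. Qed.

Lemma cget_in m x i : (1 <= i <= m)%nat -> cget m x i = x i.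
Proof. intros [H1 H2]. unfold cget. apply Nat.leb_le in H1, H2. rewrite H1, H2. reflexivity. Qed.
Lemma cget_out m x i : (i = 0 \/ m < i)%nat -> cget m x i = 0%nat.
Proof. intros H. unfold cget. destruct H as [->|H]; [reflexivity|].
  destruct (Nat.leb 1 i); simpl; auto. assert (Nat.leb i m = false) by (apply Nat.leb_gt; lia). rewrite H0; reflexivity. Qed.

Definition Gen (b0 b1 : R) (n : nat) (Phi : (nat -> nat) -> R) (x : nat -> nat) : R :=
  sumR (sites n) (fun j => rate b0 b1 n x j * (Phi (upd x j) - Phi x)).

Lemma in_sites n j : In j (sites n) <-> (1 <= j <= n)%nat.
Proof. unfold sites. rewrite in_seq. lia. Qed.
Lemma exp_le_mono x y : x <= y -> exp x <= exp y.
Proof. intros [H|H]; [left; apply exp_increasing; auto| rewrite H; lra]. Qed.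
Lemma Rdiv_le_0_compat a b : 0 <= a -> 0 < b -> 0 <= a / b.
Proof. intros. unfold Rdiv. apply Rmult_le_pos; auto. left; apply Rinv_0_lt_compat; auto. Qed.

Section Ch.
Variables (b0 b1 : R) (n : nat) (Phi : (nat -> nat) -> R) (th c a : R).
Hypotheses (Hn : (1 <= n)%nat) (Hb0 : 0 < b0) (Hb : b0 <= b1) (Hth : 0 <= th) (Hc : 0 <= c)
  (HP0 : forall x, 0 <= Phi x) (HP1 : forall x, exp (th * INR (x n)) <= Phi x)
  (HG : forall x, Gen b0 b1 n Phi x <= c * Phi x).

Let L := Lam b0 b1 n.
Lemma L_eq : L = INR n * b1.
Proof. unfold L, Lam. rewrite Rmax_right; auto. Qed.
Lemma L_pos : 0 < L.
Proof. rewrite L_eq. apply Rmult_lt_0_compat; [apply lt_0_INR; lia| lra]. Qed.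

Lemma sum_rates x : sumR (sites n) (fun j => rate b0 b1 n x j) <= L.
Proof. rewrite L_eq. replace (INR n) with (INR (length (sites n))) by (unfold sites; rewrite length_seq; auto).
  apply sumR_const_le. intros; apply rate_bounds; lra. Qed.

Lemma Ek_bound : forall k x, 0 <= Ek n b0 b1 a k x <= Phi x * ((1 + c / L) ^ k * exp (- (th * a))).
Proof.
  pose proof L_pos as HL.
  induction k as [|k IH]; intros x.
  - simpl. rewrite Rmult_1_l. destruct (Rle_dec a (INR (cget n x n))) as [h|h].
    + split; [lra|]. rewrite cget_in in h by lia.
      pose proof (HP1 x). assert (exp (th * a) <= exp (th * INR (x n))).
      { apply exp_le_mono. apply Rmult_le_compat_l; auto. } 
      assert (exp (th*a) * exp (-(th*a)) = 1) by (rewrite <- exp_plus; replace (th*a + - (th*a)) with 0 by ring; apply exp_0).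
      assert (0 < exp (-(th*a))) by apply exp_pos.
      nra.
    + split; [lra|]. apply Rmult_le_pos; [apply HP0| left; apply exp_pos].
  - cbn [Ek]. change (Lam b0 b1 n) with L. set (Q := (1 + c / L) ^ k * exp (- (th * a))).
    assert (HQ : 0 <= Q). { unfold Q. apply Rmult_le_pos; [apply pow_le|left; apply exp_pos].
      assert (0 <= c / L) by (apply Rdiv_le_0_compat; lra). lra. }
    set (Rt := sumR (sites n) (fun j => rate b0 b1 n x j)).
    assert (HRt : Rt <= L) by apply sum_rates.
    assert (HRt0 : 0 <= Rt) by (apply sumR_nonneg; intros; apply rate_bounds; lra).
    assert (Hs : sumR (sites n) (fun j => rate b0 b1 n x j / L) = Rt / L).
    { unfold Rt. rewrite <- (Rplus_0_r (sumR _ (fun j => rate b0 b1 n x j) / L)).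
      rewrite <- (Rmult_0_l (sumR (sites n) (fun j => rate b0 b1 n x j))).
      unfold Rdiv. rewrite Rmult_comm, <- (Rmult_0_l 0). 
      rewrite <- sumR_lin. apply sumR_ext; intros. ring. }
    rewrite Hs.
    assert (H1 : 0 <= 1 - Rt / L). { assert (Rt / L <= 1). { apply Rmult_le_reg_r with L; auto. unfold Rdiv. rewrite Rmult_assoc, Rinv_l; lra. } lra. }
    set (A := sumR (sites n) (fun j => rate b0 b1 n x j * Phi (upd x j))).
    assert (HGen : Gen b0 b1 n Phi x = A - Rt * Phi x).
    { unfold Gen, A, Rt. replace (sumR (sites n) (fun j => rate b0 b1 n x j * Phi (upd x j)) - sumR (sites n) (fun j => rate b0 b1 n x j) * Phi x)
        with (1 * sumR (sites n) (fun j => rate b0 b1 n x j * Phi (upd x j)) + (- Phi x) * sumR (sites n) (fun j => rate b0 b1 n x j)) by ring.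
      rewrite <- sumR_lin. apply sumR_ext; intros; ring. }
    pose proof (HG x) as HGx. rewrite HGen in HGx.
    destruct (IH x) as [I0 I1].
    split.
    + apply Rplus_le_le_0_compat; [|apply Rmult_le_pos; auto].
      apply sumR_nonneg; intros j _. apply Rmult_le_pos; [|apply IH].
      apply Rdiv_le_0_compat; [apply rate_bounds; lra|auto].
    + apply Rle_trans with (sumR (sites n) (fun j => rate b0 b1 n x j / L * (Phi (upd x j) * Q)) + (1 - Rt / L) * (Phi x * Q)).
      * apply Rplus_le_compat; [|apply Rmult_le_compat_l; auto].
        apply sumR_le; intros j _. apply Rmult_le_compat_l; [|apply IH].
        apply Rdiv_le_0_compat; [apply rate_bounds; lra|auto].
      * assert (E : sumR (sites n) (fun j => rate b0 b1 n x j / L * (Phi (upd x j) * Q)) = Q / L * A).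
        { unfold A. rewrite <- (Rplus_0_r (Q / L * _)). rewrite <- (Rmult_0_l (sumR (sites n) (fun j => rate b0 b1 n x j))).
          rewrite <- sumR_lin. apply sumR_ext; intros. field. lra. }
        rewrite E. simpl pow.
        replace (Phi x * ((1 + c / L) * (1 + c / L) ^ k * exp (- (th * a)))) with (Q * (Phi x * (1 + c / L))) by (unfold Q; ring).
        assert (Q / L * A + (1 - Rt / L) * (Phi x * Q) = Q * (Phi x + (A - Rt * Phi x) / L)) by (field; lra).
        rewrite H.
        apply Rmult_le_compat_l; auto.
        assert ((A - Rt * Phi x) / L <= c / L * Phi x).
        { unfold Rdiv. rewrite Rmult_comm, (Rmult_comm c), Rmult_assoc. apply Rmult_le_compat_l; [left; apply Rinv_0_lt_compat; auto|]. lra. }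
        lra.
Qed.
End Ch.

Lemma cv_const K : Un_cv (fun _ => K) K.
Proof. intros e He. exists 0%nat. intros. unfold Rdist. rewrite Rminus_diag, Rabs_R0. lra. Qed.

Lemma exp_series_scaled K x : Un_cv (fun N => sum_f_R0 (fun k => K * (/ INR (fact k) * x ^ k)) N) (K * exp x).
Proof.
  assert (H : Un_cv (fun N => sum_f_R0 (fun k => / INR (fact k) * x ^ k) N) (exp x)).
  { unfold exp. destruct (exist_exp x) as [l Hl]. simpl. exact Hl. }
  pose proof (CV_mult _ _ _ _ (cv_const K) H) as H2.
  intros e He. destruct (H2 e He) as [N HN]. exists N. intros m Hm.
  replace (sum_f_R0 (fun k => K * (/ INR (fact k) * x ^ k)) m) with (K * sum_f_R0 (fun k => / INR (fact k) * x ^ k) m).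
  apply HN; auto. rewrite scal_sum. apply sum_eq; intros; ring.
Qed.

Lemma chernoff (b0 b1 : R) (n : nat) (Phi : (nat -> nat) -> R) (th c : R) :
  (1 <= n)%nat -> 0 < b0 -> b0 <= b1 -> 0 <= th -> 0 <= c ->
  (forall x, 0 <= Phi x) -> (forall x, exp (th * INR (x n)) <= Phi x) ->
  (forall x, Gen b0 b1 n Phi x <= c * Phi x) ->
  forall t a, 0 <= t -> ProbGe_le n b0 b1 t a (Phi zero_conf * exp (c * t - th * a)).
Proof.
  intros Hn Hb0 Hb Hth Hc HP0 HP1 HG t a Ht.
  set (L := Lam b0 b1 n).
  assert (HL : 0 < L) by (apply L_pos; auto).
  set (q := 1 + c / L).
  set (K := Phi zero_conf * exp (- (th * a)) * exp (- (L * t))).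
  set (u := fun k => exp (- (L * t)) * (L * t) ^ k / INR (fact k) * Ek n b0 b1 a k zero_conf).
  set (B := fun k => K * (/ INR (fact k) * (L * t * q) ^ k)).
  assert (HuB : forall k, 0 <= u k <= B k).
  { intros k. destruct (Ek_bound b0 b1 n Phi th c a Hn Hb0 Hb Hth Hc HP0 HP1 HG k zero_conf) as [E0 E1].
    fold L in E0, E1.
    assert (Hw : 0 <= exp (- (L * t)) * (L * t) ^ k / INR (fact k)).
    { apply Rdiv_le_0_compat. apply Rmult_le_pos; [left; apply exp_pos| apply pow_le; nra].
      apply lt_0_INR. apply lt_O_fact. }
    unfold u, B. split. apply Rmult_le_pos; auto.
    apply Rle_trans with (exp (- (L * t)) * (L * t) ^ k / INR (fact k) * (Phi zero_conf * (q ^ k * exp (- (th * a))))).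
    apply Rmult_le_compat_l; auto.
    unfold K. rewrite !Rpow_mult_distr. unfold Rdiv. right. ring. }
  destruct (Rseries_CV_comp u B HuB (exist _ _ (exp_series_scaled K (L * t * q)))) as [p Hp].
  exists p. split.
  - exact Hp.
  - apply Rle_trans with (K * exp (L * t * q)).
    + eapply Rle_cv_lim; [ | exact Hp | apply exp_series_scaled]. intros N; apply sum_Rle; intros; apply HuB.
    + unfold K. right. replace (L * t * q) with (L * t + c * t) by (unfold q; field; lra).
      rewrite !Rmult_assoc. f_equal. rewrite <- !exp_plus. f_equal. ring.
Qed.

Lemma exp_sub1_le u : 0 <= u < 1 -> exp u - 1 <= u / (1 - u).
Proof. intros Hu. pose proof (exp_ineq1_le (- u)).
  assert (exp u * exp (- u) = 1) by (rewrite <- exp_plus; replace (u + - u) with 0 by ring; apply exp_0).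
  pose proof (exp_pos u).
  assert (exp u * (1 - u) <= 1) by nra.
  apply Rmult_le_reg_r with (1 - u); [lra|]. unfold Rdiv. rewrite Rmult_assoc, Rinv_l; lra. Qed.

Lemma exp_ge1 u : 0 <= u -> 1 <= exp u.
Proof. intros. pose proof (exp_ineq1_le u). lra. Qed.

Definition fmax (x : nat -> nat) (l : list nat) : nat := fold_right Nat.max 0%nat (map x l).

Lemma fmax_ge x l j : In j l -> (x j <= fmax x l)%nat.
Proof. induction l; simpl; [tauto|]. intros [->|H]; unfold fmax in *; simpl; [lia|]. specialize (IHl H); lia. Qed.

Lemma fmax_upd x l j : (fmax (upd x j) l <= Nat.max (fmax x l) (S (x j)))%nat.
Proof. induction l as [|i l IH]; unfold fmax in *; simpl; [lia|]. unfold upd at 1.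
  destruct (Nat.eqb i j) eqn:E; [apply Nat.eqb_eq in E; subst|]; lia. Qed.

Lemma fmax_zero l : fmax zero_conf l = 0%nat.
Proof. induction l; unfold fmax in *; simpl; auto. Qed.

Lemma fmax_attained x l : l <> [] -> exists j, In j l /\ x j = fmax x l.
Proof. induction l as [|i l IH]; [tauto|]. intros _. destruct l as [|i' l'].
  - exists i; split; [left; auto|unfold fmax; simpl; lia].
  - destruct IH as [j [Hj Ej]]; [discriminate|].
    unfold fmax in *. simpl in Ej |- *. destruct (Nat.le_ge_cases (x i) (Nat.max (x i') (fold_right Nat.max 0%nat (map x l')))).
    + exists j; split; [right; auto| lia].
    + exists i; split; [left; auto| lia]. Qed.

Lemma cget_le_fmax n x i : (cget n x i <= fmax x (sites n))%nat.
Proof. destruct (Nat.leb 1 i && Nat.leb i n)%bool eqn:E; unfold cget; rewrite E; [|lia].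
  apply andb_prop in E; destruct E as [E1 E2]; apply Nat.leb_le in E1, E2. apply fmax_ge, in_sites; lia. Qed.

Lemma bound1 b0 b1 n eps : 0 < b0 -> b0 < b1 -> (1 <= n)%nat -> 0 < eps ->
  exists al, 0 < al /\ forall t, 0 <= t ->
    ProbGe_le n b0 b1 t ((INR n * b0 + eps) * t) (1 * exp (- (al * t))).
Proof.
  intros Hb0 Hb Hn He.
  assert (HnR : 1 <= INR n) by (apply (le_INR 1); lia).
  set (th := eps / (2 * INR n * b0 + eps)).
  assert (Hth : 0 < th < 1).
  { unfold th. split. apply Rdiv_lt_0_compat; nra. apply Rmult_lt_reg_r with (2 * INR n * b0 + eps); [nra|].
    unfold Rdiv. rewrite Rmult_assoc, Rinv_l; nra. }
  set (c := INR n * (b0 * (exp th - 1))).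
  set (Phi := fun x => exp (th * INR (fmax x (sites n)))).
  exists (th * eps / 2). split; [nra|]. intros t Ht.
  assert (Hc : 0 <= c). { unfold c. pose proof (exp_ge1 th). apply Rmult_le_pos; [lra|]. apply Rmult_le_pos; lra. }
  pose proof (chernoff b0 b1 n Phi th c Hn Hb0 (Rlt_le _ _ Hb) (Rlt_le _ _ (proj1 Hth)) Hc) as Ch.
  destruct Ch with (t := t) (a := (INR n * b0 + eps) * t) as [p [Hp1 Hp2]]; auto.
  - intros; left; apply exp_pos.
  - intros x. apply exp_le_mono. apply Rmult_le_compat_l; [lra|]. apply le_INR. apply fmax_ge, in_sites; lia.
  - intros x. unfold Gen. unfold c. rewrite Rmult_assoc.
    replace (INR n) with (INR (length (sites n))) by (unfold sites; rewrite length_seq; auto).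
    apply sumR_const_le. intros j Hj. apply in_sites in Hj.
    pose proof (exp_ge1 th ltac:(lra)). pose proof (exp_pos (th * INR (fmax x (sites n)))).
    pose proof (fmax_upd x (sites n) j) as Hu.
    pose proof (fmax_ge x (sites n) j ltac:(apply in_sites; lia)) as Hjm.
    destruct (Nat.lt_ge_cases (x j) (fmax x (sites n))) as [Hlt|Hge].
    + assert (Phi (upd x j) <= Phi x).
      { unfold Phi. apply exp_le_mono. apply Rmult_le_compat_l; [lra|]. apply le_INR. lia. }
      pose proof (rate_bounds b0 b1 n x j ltac:(lra)).
      assert (rate b0 b1 n x j * (Phi (upd x j) - Phi x) <= 0).
      { assert (0 <= rate b0 b1 n x j * (Phi x - Phi (upd x j))) by (apply Rmult_le_pos; lra). lra. }
      assert (0 <= b0 * (exp th - 1) * Phi x). { apply Rmult_le_pos; [apply Rmult_le_pos|]; unfold Phi; lra. }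
      lra.
    + assert (Hv : Vj n x j = 0%nat).
      { unfold Vj. rewrite (cget_in n x j) by lia.
        pose proof (cget_le_fmax n x (j - 1)). pose proof (cget_le_fmax n x (j + 1)).
        destruct (Nat.ltb (x j) (cget n x (j - 1))) eqn:E1; [apply Nat.ltb_lt in E1; lia|].
        destruct (Nat.ltb (x j) (cget n x (j + 1))) eqn:E2; [apply Nat.ltb_lt in E2; lia|]. reflexivity. }
      assert (Hr : rate b0 b1 n x j = b0) by (unfold rate; rewrite Hv; reflexivity).
      rewrite Hr.
      assert (Phi (upd x j) <= exp th * Phi x).
      { unfold Phi. rewrite <- exp_plus. apply exp_le_mono.
        assert (INR (fmax (upd x j) (sites n)) <= 1 + INR (fmax x (sites n))).
        { rewrite Rplus_comm, <- S_INR. apply le_INR. lia. } nra. }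
      assert (0 <= b0 * (exp th * Phi x - Phi (upd x j))) by (apply Rmult_le_pos; lra). lra.
  - exists p. split; auto. eapply Rle_trans; [exact Hp2|].
    unfold Phi. rewrite fmax_zero. simpl INR. rewrite Rmult_0_r, exp_0.
    apply Rmult_le_compat_l; [lra|]. apply exp_le_mono.
    assert (c <= th * (INR n * b0 + eps / 2)).
    { unfold c. pose proof (exp_sub1_le th ltac:(lra)).
      assert (1 - th = 2 * INR n * b0 / (2 * INR n * b0 + eps)) by (unfold th; field; nra).
      assert (th / (1 - th) = eps / (2 * INR n * b0)) by (rewrite H0; unfold th; field; nra).
      rewrite H1 in H.
      assert (b0 * (exp th - 1) <= b0 * (eps / (2 * INR n * b0))) by (apply Rmult_le_compat_l; lra).
      assert (INR n * (b0 * (eps / (2 * INR n * b0))) = eps / 2) by (field; nra).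
      assert (th * (INR n * b0 + eps / 2) = eps/2 * (th * (2 * INR n * b0 + eps)) / eps) by (field; lra).
      assert (th * (2 * INR n * b0 + eps) = eps) by (unfold th; field; nra).
      assert (INR n * (b0 * (exp th - 1)) <= eps / 2) by nra.
      rewrite H4, H5. replace (eps / 2 * eps / eps) with (eps / 2) by (field; lra). lra. }
    nra.
Qed.

Lemma sumR_point_out l j f : ~ In j l -> sumR l (fun i => if Nat.eqb i j then f i else 0) = 0.
Proof. induction l as [|a l IH]; intros H; [reflexivity|]. rewrite sumR_cons, IH by (simpl in H; tauto).
  destruct (Nat.eqb a j) eqn:E; [apply Nat.eqb_eq in E; subst; simpl in H; tauto| ring]. Qed.
Lemma sumR_point l j f : NoDup l -> In j l -> sumR l (fun i => if Nat.eqb i j then f i else 0) = f j.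
Proof. induction l as [|a l IH]; intros Hd H; [destruct H|]. inversion Hd; subst. rewrite sumR_cons.
  destruct (Nat.eqb a j) eqn:E.
  - apply Nat.eqb_eq in E; subst. rewrite sumR_point_out by auto. ring.
  - destruct H as [H|H]; [subst; rewrite Nat.eqb_refl in E; discriminate|]. rewrite IH; auto. ring. Qed.

Lemma cget_upd n x j i : (1 <= j <= n)%nat ->
  cget n (upd x j) i = if Nat.eqb i j then S (cget n x i) else cget n x i.
Proof. intros Hj. destruct (Nat.eqb i j) eqn:E.
  - apply Nat.eqb_eq in E; subst. rewrite !cget_in by lia. unfold upd. rewrite Nat.eqb_refl. reflexivity.
  - destruct (le_lt_dec 1 i); [destruct (le_lt_dec i n)|].
    + rewrite !cget_in by lia. unfold upd. rewrite E. reflexivity.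
    + rewrite !cget_out by lia. reflexivity.
    + rewrite !cget_out by lia. reflexivity. Qed.

Lemma Rmult_le_0_l_compat_help a b : 0 <= a -> b <= 0 -> a * b <= 0.
Proof. intros. assert (0 <= a * (- b)) by (apply Rmult_le_pos; lra). lra. Qed.

Section P3.
Variables (n : nat).
Definition EE (x : nat -> nat) (i : nat) : R := exp (INR (cget n x i)).
Definition SS (x : nat -> nat) : R := sumR (sites n) (EE x).
Definition PP (x : nat -> nat) : R := sumR (seq 0 (S n)) (fun i => Rabs (EE x (S i) - EE x i)).

Lemma EE_pos x i : 0 < EE x i.
Proof. apply exp_pos. Qed.

Lemma EE_upd x j i : (1 <= j <= n)%nat -> EE (upd x j) i = if Nat.eqb i j then exp 1 * EE x i else EE x i.
Proof. intros. unfold EE. rewrite cget_upd by auto. destruct (Nat.eqb i j); auto.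
  rewrite S_INR, exp_plus. ring. Qed.

Lemma SS_upd x j : (1 <= j <= n)%nat -> SS (upd x j) - SS x = (exp 1 - 1) * EE x j.
Proof. intros Hj. unfold SS.
  replace (sumR (sites n) (EE (upd x j)) - sumR (sites n) (EE x))
    with (1 * sumR (sites n) (EE (upd x j)) + (-1) * sumR (sites n) (EE x)) by ring.
  rewrite <- sumR_lin.
  rewrite (sumR_ext _ _ (fun i => if Nat.eqb i j then (exp 1 - 1) * EE x i else 0)).
  - rewrite sumR_point; auto. apply seq_NoDup. apply in_sites; auto.
  - intros i _. rewrite EE_upd by auto. destruct (Nat.eqb i j); ring. Qed.

Lemma le_EE x i k : (cget n x i <= cget n x k)%nat -> EE x i <= EE x k.
Proof. intros. unfold EE. apply exp_le_mono. apply le_INR; auto. Qed.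
Lemma lt_EE x i k : (cget n x i < cget n x k)%nat -> exp 1 * EE x i <= EE x k.
Proof. intros. unfold EE. rewrite <- exp_plus. apply exp_le_mono. rewrite Rplus_comm, <- S_INR. apply le_INR; auto. Qed.

Lemma pair_change x j k : 
  Rabs (EE x k - exp 1 * EE x j) - Rabs (EE x k - EE x j) =
  if Nat.ltb (cget n x j) (cget n x k) then - ((exp 1 - 1) * EE x j) else (exp 1 - 1) * EE x j.
Proof. pose proof (EE_pos x j). pose proof (exp_ge1 1 ltac:(lra)).
  destruct (Nat.ltb (cget n x j) (cget n x k)) eqn:E.
  - apply Nat.ltb_lt in E. pose proof (lt_EE x j k E).
    rewrite !Rabs_pos_eq by nra. ring.
  - apply Nat.ltb_ge in E. pose proof (le_EE x k j E).
    rewrite (Rabs_left1 (EE x k - exp 1 * EE x j)) by nra. rewrite (Rabs_left1 (EE x k - EE x j)) by lra. ring. Qed.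

Lemma PP_upd x j : (1 <= j <= n)%nat -> PP (upd x j) - PP x =
  (if Nat.ltb (cget n x j) (cget n x (j - 1)) then - ((exp 1 - 1) * EE x j) else (exp 1 - 1) * EE x j) +
  (if Nat.ltb (cget n x j) (cget n x (j + 1)) then - ((exp 1 - 1) * EE x j) else (exp 1 - 1) * EE x j).
Proof. intros Hj. unfold PP.
  set (al := Rabs (EE x (j - 1) - exp 1 * EE x j) - Rabs (EE x (j - 1) - EE x j)).
  set (be := Rabs (EE x (j + 1) - exp 1 * EE x j) - Rabs (EE x (j + 1) - EE x j)).
  replace (sumR (seq 0 (S n)) (fun i => Rabs (EE (upd x j) (S i) - EE (upd x j) i)) - sumR (seq 0 (S n)) (fun i => Rabs (EE x (S i) - EE x i)))
    with (1 * sumR (seq 0 (S n)) (fun i => Rabs (EE (upd x j) (S i) - EE (upd x j) i)) + (-1) * sumR (seq 0 (S n)) (fun i => Rabs (EE x (S i) - EE x i))) by ring.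
  rewrite <- sumR_lin.
  rewrite (sumR_ext _ _ (fun i => 1 * (if Nat.eqb i (j - 1) then (fun _ => al) i else 0) + 1 * (if Nat.eqb i j then (fun _ => be) i else 0))).
  - rewrite sumR_lin, !sumR_point; try apply seq_NoDup; try (apply in_seq; lia).
    unfold al, be. rewrite (pair_change x j (j - 1)), (pair_change x j (j + 1)). ring.
  - intros i _. rewrite !EE_upd by auto. cbv beta.
    destruct (Nat.eq_dec i (j - 1)) as [->|n1].
    + rewrite Nat.eqb_refl. replace (S (j - 1)) with j by lia. rewrite Nat.eqb_refl.
      rewrite (proj2 (Nat.eqb_neq (j - 1) j)) by lia.
      unfold al. rewrite (Rabs_minus_sym (EE x (j-1))), (Rabs_minus_sym (EE x (j-1)) (EE x j)). ring.
    + destruct (Nat.eq_dec i j) as [->|n2].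
      * rewrite (proj2 (Nat.eqb_neq j (j - 1))) by lia. rewrite Nat.eqb_refl, (proj2 (Nat.eqb_neq (S j) j)) by lia.
        unfold be. replace (j + 1)%nat with (S j) by lia. ring.
      * rewrite (proj2 (Nat.eqb_neq i (j - 1))), (proj2 (Nat.eqb_neq i j)), (proj2 (Nat.eqb_neq (S i) j)) by lia. ring.
Qed.

Definition AA x i := if Nat.ltb (cget n x (S i)) (cget n x i) then Rabs (EE x (S i) - EE x i) else 0.
Definition BB x i := if Nat.ltb (cget n x i) (cget n x (S i)) then Rabs (EE x (S i) - EE x i) else 0.

Lemma AA_nonneg x i : 0 <= AA x i.
Proof. unfold AA; destruct (Nat.ltb _ _); [apply Rabs_pos|lra]. Qed.
Lemma BB_nonneg x i : 0 <= BB x i.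
Proof. unfold BB; destruct (Nat.ltb _ _); [apply Rabs_pos|lra]. Qed.
Lemma AB_le x i : AA x i + BB x i <= Rabs (EE x (S i) - EE x i).
Proof. unfold AA, BB. destruct (Nat.ltb (cget n x (S i)) (cget n x i)) eqn:E1;
  destruct (Nat.ltb (cget n x i) (cget n x (S i))) eqn:E2; try (pose proof (Rabs_pos (EE x (S i) - EE x i)); lra).
  apply Nat.ltb_lt in E1, E2. lia. Qed.

Lemma Gen_term (b0 b1 mu : R) x j : 0 <= b0 <= b1 -> 0 <= mu -> (1 <= j <= n)%nat ->
  rate b0 b1 n x j * ((SS (upd x j) + mu * PP (upd x j)) - (SS x + mu * PP x)) <=
  b0 * (1 + 2 * mu) * ((exp 1 - 1) * EE x j) + b1 * (AA x (j - 1) + BB x j).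
Proof. intros Hb Hmu Hj.
  replace ((SS (upd x j) + mu * PP (upd x j)) - (SS x + mu * PP x)) with ((SS (upd x j) - SS x) + mu * (PP (upd x j) - PP x)) by ring.
  rewrite SS_upd, PP_upd by auto.
  set (d := (exp 1 - 1) * EE x j).
  assert (Hd : 0 <= d). { unfold d. pose proof (exp_ge1 1 ltac:(lra)). pose proof (EE_pos x j). nra. }
  pose proof (AA_nonneg x (j - 1)). pose proof (BB_nonneg x j).
  destruct (rate_cases b0 b1 n x j) as [[HV ->]|[HV ->]].
  - unfold Vj in HV.
    destruct (Nat.ltb (cget n x j) (cget n x (j - 1))); destruct (Nat.ltb (cget n x j) (cget n x (j + 1))); simpl in HV; try discriminate.
    assert (0 <= b1 * (AA x (j - 1) + BB x j)) by (apply Rmult_le_pos; lra). nra.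
  - unfold Vj in HV.
    assert (Hdle : d <= AA x (j - 1) + BB x j).
    { destruct (Nat.ltb (cget n x j) (cget n x (j - 1))) eqn:E1.
      - unfold AA. replace (S (j - 1)) with j by lia. rewrite E1. apply Nat.ltb_lt in E1.
        pose proof (lt_EE x j (j - 1) E1). assert (EE x j <= exp 1 * EE x j) by (pose proof (exp_ge1 1 ltac:(lra)); pose proof (EE_pos x j); nra).
        rewrite Rabs_left1 by lra. unfold d. replace ((exp 1 - 1) * EE x j) with (exp 1 * EE x j - EE x j) by ring. lra.
      - destruct (Nat.ltb (cget n x j) (cget n x (j + 1))) eqn:E2; simpl in HV; [|lia].
        unfold BB. replace (S j) with (j + 1)%nat by lia. rewrite E2. apply Nat.ltb_lt in E2.
        pose proof (lt_EE x j (j + 1) E2). assert (EE x j <= exp 1 * EE x j) by (pose proof (exp_ge1 1 ltac:(lra)); pose proof (EE_pos x j); nra).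
        rewrite Rabs_pos_eq by lra. unfold d. replace ((exp 1 - 1) * EE x j) with (exp 1 * EE x j - EE x j) by ring. lra. }
    assert (Hs : (if Nat.ltb (cget n x j) (cget n x (j - 1)) then - d else d) + (if Nat.ltb (cget n x j) (cget n x (j + 1)) then - d else d) <= 0).
    { destruct (Nat.ltb (cget n x j) (cget n x (j - 1))); destruct (Nat.ltb (cget n x j) (cget n x (j + 1))); simpl in HV; try lia; lra. }
    assert (0 <= b0 * (1 + 2 * mu) * d) by (apply Rmult_le_pos; [|auto]; apply Rmult_le_pos; lra).
    assert (b1 * (d + mu * ((if Nat.ltb (cget n x j) (cget n x (j - 1)) then - d else d) + (if Nat.ltb (cget n x j) (cget n x (j + 1)) then - d else d))) <= b1 * d).
    { apply Rmult_le_compat_l; [lra|]. assert (mu * ((if Nat.ltb (cget n x j) (cget n x (j - 1)) then - d else d) + (if Nat.ltb (cget n x j) (cget n x (j + 1)) then - d else d)) <= 0).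
      { apply Rmult_le_0_l_compat_help; auto. } lra. }
    assert (b1 * d <= b1 * (AA x (j - 1) + BB x j)) by (apply Rmult_le_compat_l; lra).
    lra.
Qed.

Lemma sum_AA x : sumR (sites n) (fun j => AA x (j - 1)) <= sumR (seq 0 (S n)) (AA x).
Proof. unfold sites. rewrite <- seq_shift, sumR_map.
  rewrite (sumR_ext _ _ (AA x)) by (intros; f_equal; lia).
  replace (S n) with (n + 1)%nat by lia. rewrite seq_app. apply sumR_mono_sub. intros; apply AA_nonneg. Qed.

Lemma sum_BB x : sumR (sites n) (BB x) <= sumR (seq 0 (S n)) (BB x).
Proof. unfold sites. simpl seq. rewrite sumR_cons. pose proof (BB_nonneg x 0). lra. Qed.

Lemma Gen_bound3 (b0 b1 mu : R) x : 0 <= b0 <= b1 -> 0 <= mu ->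
  Gen b0 b1 n (fun x => SS x + mu * PP x) x <= b0 * (1 + 2 * mu) * (exp 1 - 1) * SS x + b1 * PP x.
Proof. intros Hb Hmu. unfold Gen.
  eapply Rle_trans. { apply sumR_le. intros j Hj. apply Gen_term; auto. apply in_sites; auto. }
  replace (sumR (sites n) (fun j => b0 * (1 + 2 * mu) * ((exp 1 - 1) * EE x j) + b1 * (AA x (j - 1) + BB x j)))
    with (b0 * (1 + 2 * mu) * (exp 1 - 1) * sumR (sites n) (EE x) + b1 * (1 * sumR (sites n) (fun j => AA x (j - 1)) + 1 * sumR (sites n) (BB x))).
  2: { rewrite <- sumR_lin, <- sumR_lin. apply sumR_ext; intros; ring. }
  fold (SS x). apply Rplus_le_compat_l. apply Rmult_le_compat_l; [lra|].
  pose proof (sum_AA x). pose proof (sum_BB x).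
  assert (sumR (seq 0 (S n)) (AA x) + sumR (seq 0 (S n)) (BB x) <= PP x).
  { unfold PP. rewrite <- (Rmult_1_l (sumR _ (AA x))), <- (Rmult_1_l (sumR _ (BB x))), <- sumR_lin.
    apply sumR_le; intros. rewrite !Rmult_1_l. apply AB_le. }
  lra. Qed.

End P3.

Lemma sumR_term l f j : In j l -> (forall i, In i l -> 0 <= f i) -> f j <= sumR l f.
Proof. induction l as [|a l IH]; intros Hj Hf; [destruct Hj|]. rewrite sumR_cons.
  destruct Hj as [->|Hj].
  - assert (0 <= sumR l f) by (apply sumR_nonneg; intros; apply Hf; simpl; auto). lra.
  - assert (0 <= f a) by (apply Hf; simpl; auto). assert (f j <= sumR l f) by (apply IH; auto; intros; apply Hf; simpl; auto). lra. Qed.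

Lemma sumR_const l c : sumR l (fun _ => c) = INR (length l) * c.
Proof. induction l; [rewrite sumR_nil; simpl; ring|]. rewrite sumR_cons, IHl. change (length (a :: l)) with (S (length l)). rewrite S_INR. ring. Qed.

Lemma cget_zero n i : cget n zero_conf i = 0%nat.
Proof. unfold cget. destruct (Nat.leb 1 i && Nat.leb i n)%bool; reflexivity. Qed.

Lemma bound3 b0 b1 n eps : 0 < b0 -> b0 < b1 -> (1 <= n)%nat -> 0 < eps ->
  forall t, 0 <= t ->
    ProbGe_le n b0 b1 t ((4 * sqrt 2 * sqrt (b1 * b0) + eps) * t) (INR n * exp (- (eps * t))).
Proof.
  intros Hb0 Hb Hn He t Ht.
  set (s := sqrt (b1 * b0)).
  assert (Hs2 : s * s = b1 * b0) by (apply sqrt_sqrt; nra).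
  assert (Hs0 : 0 < s) by (apply sqrt_lt_R0; nra).
  assert (Hb0s : b0 <= s). { destruct (Rle_lt_dec b0 s); auto. nra. }
  assert (Hr2 : sqrt 2 * sqrt 2 = 2) by (apply sqrt_sqrt; lra).
  assert (Hr0 : 0 < sqrt 2) by (apply sqrt_lt_R0; lra).
  assert (Hr2le : sqrt 2 <= 2) by nra.
  set (lam := 4 * sqrt 2 * s).
  assert (Hlam : 0 < lam) by (unfold lam; nra).
  set (mu := b1 / lam).
  assert (Hmu : 0 <= mu) by (unfold mu; apply Rdiv_le_0_compat; lra).
  assert (He1 : exp 1 - 1 <= 2) by (pose proof exp_le_3; lra).
  assert (He0 : 0 <= exp 1 - 1) by (pose proof (exp_ge1 1); lra).
  assert (Hcoef : b0 * (1 + 2 * mu) * (exp 1 - 1) <= lam).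
  { assert (E : b0 * (1 + 2 * mu) * (exp 1 - 1) = b0 * (lam + 2 * b1) * (exp 1 - 1) / lam) by (unfold mu; field; lra).
    rewrite E. apply Rmult_le_reg_r with lam; auto. unfold Rdiv. rewrite Rmult_assoc, Rinv_l, Rmult_1_r by lra.
    assert (b0 * (lam + 2 * b1) * (exp 1 - 1) <= b0 * (lam + 2 * b1) * 2) by (apply Rmult_le_compat_l; nra).
    assert (b0 * lam <= s * lam) by (apply Rmult_le_compat_r; lra).
    assert (lam * lam = 32 * (s * s)) by (unfold lam; nra).
    assert (s * lam <= 8 * (s * s)) by (unfold lam; nra).
    nra. }
  set (Phi := fun x => SS n x + mu * PP n x).
  assert (HSS : forall x, 0 <= SS n x) by (intros; apply sumR_nonneg; intros; left; apply EE_pos).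
  assert (HPP : forall x, 0 <= PP n x) by (intros; apply sumR_nonneg; intros; apply Rabs_pos).
  destruct (chernoff b0 b1 n Phi 1 lam Hn Hb0 (Rlt_le _ _ Hb) ltac:(lra) ltac:(lra)) with (t := t) (a := (4 * sqrt 2 * sqrt (b1 * b0) + eps) * t) as [p [Hp1 Hp2]]; auto.
  - intros x. unfold Phi. specialize (HSS x). specialize (HPP x). nra.
  - intros x. unfold Phi. rewrite Rmult_1_l.
    assert (exp (INR (x n)) <= SS n x).
    { unfold SS. replace (exp (INR (x n))) with (EE n x n) by (unfold EE; rewrite cget_in by lia; auto).
      apply sumR_term; [apply in_sites; lia|]. intros; left; apply EE_pos. }
    specialize (HPP x). nra.
  - intros x. unfold Phi. eapply Rle_trans; [apply Gen_bound3; lra|].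
    specialize (HSS x). specialize (HPP x).
    assert (b1 = lam * mu) by (unfold mu; field; lra).
    assert (b0 * (1 + 2 * mu) * (exp 1 - 1) * SS n x <= lam * SS n x) by (apply Rmult_le_compat_r; lra).
    nra.
  - exists p. split; auto. eapply Rle_trans; [exact Hp2|].
    assert (Phi zero_conf = INR n).
    { unfold Phi, SS, PP, EE. rewrite (sumR_ext _ _ (fun _ => 1)).
      rewrite (sumR_ext (seq 0 (S n)) _ (fun _ => 0)).
      - rewrite !sumR_const. unfold sites. rewrite !length_seq. ring.
      - intros. rewrite !cget_zero. simpl. rewrite Rminus_diag, Rabs_R0; auto.
      - intros. rewrite cget_zero. simpl. apply exp_0. }
    rewrite H. right. f_equal. f_equal. unfold lam, s. ring.
Qed.

Section P2.
Variables (n : nat) (b0 b1 th : R).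
Hypotheses (Hn : (1 <= n)%nat) (Hb0 : 0 < b0) (Hb : b0 < b1) (Hth : 0 < th < 1).

Definition blk k := seq (n - k + 1) k.
Definition UU k (x : nat -> nat) : R := sumR (blk k) (fun i => INR (x i)).
Definition phi k (x : nat -> nat) : R := exp (th / INR k * UU k x).

Lemma in_blk k i : (k <= n)%nat -> In i (blk k) <-> (n - k + 1 <= i <= n)%nat.
Proof. intros. unfold blk. rewrite in_seq. lia. Qed.

Lemma UU_upd k x j : (1 <= k <= n)%nat -> (1 <= j <= n)%nat ->
  UU k (upd x j) = UU k x + (if Nat.leb (n - k + 1) j then 1 else 0).
Proof. intros Hk Hj.
  assert (E : UU k (upd x j) - UU k x = sumR (blk k) (fun i => if Nat.eqb i j then 1 else 0)).
  { unfold UU. replace (sumR (blk k) (fun i => INR (upd x j i)) - sumR (blk k) (fun i => INR (x i)))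
      with (1 * sumR (blk k) (fun i => INR (upd x j i)) + (-1) * sumR (blk k) (fun i => INR (x i))) by ring.
    rewrite <- sumR_lin. apply sumR_ext. intros i _. unfold upd. destruct (Nat.eqb i j); [rewrite S_INR|]; ring. }
  destruct (Nat.leb (n - k + 1) j) eqn:L.
  - apply Nat.leb_le in L. rewrite (sumR_point _ _ (fun _ => 1)) in E; [lra|apply seq_NoDup|apply in_blk; lia].
  - apply Nat.leb_gt in L. rewrite (sumR_point_out _ _ (fun _ => 1)) in E; [lra|]. rewrite in_blk; lia.
Qed.

Definition RR k x := sumR (blk k) (fun j => rate b0 b1 n x j).

Lemma Gen_phi k x : (1 <= k <= n)%nat ->
  Gen b0 b1 n (phi k) x = (exp (th / INR k) - 1) * phi k x * RR k x.
Proof. intros Hk. unfold Gen, sites.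
  replace n with ((n - k) + k)%nat at 1 by lia. rewrite seq_app, sumR_app.
  rewrite (sumR_ext (seq 1 (n - k)) _ (fun _ => 0)).
  2: { intros j Hj. apply in_seq in Hj. unfold phi. rewrite UU_upd by lia.
       rewrite (proj2 (Nat.leb_gt (n - k + 1) j)) by lia. rewrite Rplus_0_r. ring. }
  rewrite sumR_const, Rmult_0_r, Rplus_0_l. replace (1 + (n - k))%nat with (n - k + 1)%nat by lia.
  fold (blk k). unfold RR. rewrite <- (Rplus_0_r ((exp (th / INR k) - 1) * phi k x * _)).
  rewrite <- (Rmult_0_l (sumR (blk k) (fun j => rate b0 b1 n x j))), <- sumR_lin.
  apply sumR_ext. intros j Hj. apply in_blk in Hj; [|lia]. unfold phi. rewrite UU_upd by lia.
  rewrite (proj2 (Nat.leb_le (n - k + 1) j)) by lia.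
  rewrite Rmult_plus_distr_l, exp_plus, Rmult_1_r. ring.
Qed.

Lemma sum_good (l : list nat) f j0 : In j0 l -> (forall i, In i l -> f i <= b1) -> f j0 <= b0 ->
  sumR l f + b1 <= INR (length l) * b1 + b0.
Proof. induction l as [|a l IH]; intros H Hf Hj; [destruct H|]. rewrite sumR_cons.
  change (length (a :: l)) with (S (length l)). rewrite S_INR.
  destruct (Nat.eq_dec a j0) as [->|Ha].
  - assert (sumR l f <= INR (length l) * b1) by (apply sumR_const_le; intros; apply Hf; simpl; auto). lra.
  - destruct H as [H|H]; [congruence|]. assert (f a <= b1) by (apply Hf; simpl; auto).
    assert (sumR l f + b1 <= INR (length l) * b1 + b0) by (apply IH; auto; intros; apply Hf; simpl; auto). lra.
Qed.

Lemma bad_case k x : (1 <= k <= n)%nat -> (forall j, In j (blk k) -> Vj n x j <> 0%nat) ->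
  (k < n)%nat /\ forall i, In i (blk k) -> (x i < x (n - k))%nat.
Proof. intros Hk Hbad.
  destruct (fmax_attained x (blk k)) as [i0 [Hi0 Ei0]].
  { unfold blk. destruct k; [lia|]. simpl. discriminate. }
  pose proof Hi0 as Hi0'. apply in_blk in Hi0'; [|lia].
  assert (Hall : forall i, In i (blk k) -> (x i <= fmax x (blk k))%nat) by (intros; apply fmax_ge; auto).
  specialize (Hbad i0 Hi0). unfold Vj in Hbad. rewrite (cget_in n x i0) in Hbad by lia.
  destruct (Nat.ltb (x i0) (cget n x (i0 - 1))) eqn:E1.
  - apply Nat.ltb_lt in E1.
    destruct (le_lt_dec (n - k + 1) (i0 - 1)).
    + rewrite cget_in in E1 by lia. specialize (Hall (i0 - 1)%nat ltac:(apply in_blk; lia)). lia.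
    + destruct (Nat.eq_dec (n - k) 0).
      * rewrite cget_out in E1 by lia. lia.
      * rewrite cget_in in E1 by lia. replace (i0 - 1)%nat with (n - k)%nat in E1 by lia.
        split; [lia|]. intros i Hi. specialize (Hall i Hi). lia.
  - destruct (Nat.ltb (x i0) (cget n x (i0 + 1))) eqn:E2; [|simpl in Hbad; lia].
    apply Nat.ltb_lt in E2. destruct (le_lt_dec (i0 + 1) n).
    + rewrite cget_in in E2 by lia. specialize (Hall (i0 + 1)%nat ltac:(apply in_blk; lia)). lia.
    + rewrite cget_out in E2 by lia. lia.
Qed.

Lemma phi_mono k x : (1 <= k)%nat -> (k < n)%nat -> (forall i, In i (blk k) -> (x i < x (n - k))%nat) ->
  phi k x <= phi (S k) x.
Proof. intros Hk Hkn Hlt. unfold phi. apply exp_le_mono.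
  assert (Hs : UU (S k) x = INR (x (n - k)%nat) + UU k x).
  { unfold UU, blk. replace (n - S k + 1)%nat with (n - k)%nat by lia. simpl seq. rewrite sumR_cons.
    replace (S (n - k)) with (n - k + 1)%nat by lia. reflexivity. }
  assert (Hu : UU k x <= INR k * INR (x (n - k)%nat)).
  { unfold UU. replace (INR k) with (INR (length (blk k))) by (unfold blk; rewrite length_seq; auto).
    apply sumR_const_le. intros i Hi. apply le_INR. specialize (Hlt i Hi). lia. }
  rewrite Hs. rewrite S_INR. assert (HkR : 1 <= INR k) by (apply (le_INR 1); lia).
  unfold Rdiv. rewrite !Rmult_assoc. apply Rmult_le_compat_l; [lra|].
  apply Rmult_le_reg_l with (INR k * (INR k + 1)); [nra|].
  replace (INR k * (INR k + 1) * (/ INR k * UU k x)) with ((INR k + 1) * UU k x) by (field; lra).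
  replace (INR k * (INR k + 1) * (/ (INR k + 1) * (INR (x (n - k)%nat) + UU k x))) with (INR k * (INR (x (n - k)%nat) + UU k x)) by (field; lra).
  nra.
Qed.

End P2.

Lemma sumR_scal l (f : nat -> R) c : sumR l (fun k => c * f k) = c * sumR l f.
Proof. induction l; [rewrite !sumR_nil; ring|]. rewrite !sumR_cons, IHl; ring. Qed.
Lemma sumR_minus l (f g : nat -> R) : sumR l (fun k => f k - g k) = sumR l f - sumR l g.
Proof. induction l; [rewrite !sumR_nil; ring|]. rewrite !sumR_cons, IHl; ring. Qed.

Lemma Gen_sum n b0 b1 (l : list nat) (F : nat -> (nat -> nat) -> R) (w : nat -> R) x :
  Gen b0 b1 n (fun y => sumR l (fun k => w k * F k y)) x = sumR l (fun k => w k * Gen b0 b1 n (F k) x).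
Proof. unfold Gen.
  rewrite (sumR_ext (sites n) _ (fun j => sumR l (fun k => rate b0 b1 n x j * (w k * (F k (upd x j) - F k x))))).
  - rewrite sumR_exchange. apply sumR_ext. intros k _.
    rewrite <- sumR_scal. apply sumR_ext. intros. ring.
  - intros j _. rewrite <- sumR_minus, <- sumR_scal. apply sumR_ext. intros; ring.
Qed.

Section P2b.
Variables (n : nat) (b0 b1 th G D : R).
Hypotheses (Hn : (1 <= n)%nat) (Hb0 : 0 < b0) (Hb : b0 < b1) (Hth : 0 < th < 1) (HG0 : 0 <= G)
  (HG : forall k, (1 <= k <= n)%nat -> (exp (th / INR k) - 1) * ((INR k - 1) * b1 + b0) <= G)
  (HD : forall k, (1 <= k <= n)%nat -> (exp (th / INR k) - 1) * (INR k * b1) <= D).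

Lemma Gen_phi_bound k x : (1 <= k <= n)%nat ->
  Gen b0 b1 n (phi n th k) x <= G * phi n th k x + D * (if Nat.ltb k n then phi n th (S k) x else 0).
Proof. intros Hk. rewrite Gen_phi by lia.
  assert (HkR : 1 <= INR k) by (apply (le_INR 1); lia).
  assert (He : 0 <= exp (th / INR k) - 1) by (pose proof (exp_ge1 (th / INR k) ltac:(apply Rdiv_le_0_compat; lra)); lra).
  assert (Hp : 0 < phi n th k x) by apply exp_pos.
  assert (HD0 : 0 <= D) by (specialize (HD k Hk); assert (0 <= (exp (th / INR k) - 1) * (INR k * b1)) by (apply Rmult_le_pos; nra); lra).
  assert (Hpsi : 0 <= (if Nat.ltb k n then phi n th (S k) x else 0)) by (destruct (Nat.ltb k n); [left; apply exp_pos|lra]).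
  assert (HRk : RR n b0 b1 k x <= INR k * b1).
  { unfold RR. replace (INR k) with (INR (length (blk n k))) by (unfold blk; rewrite length_seq; auto).
    apply sumR_const_le. intros; apply rate_bounds; lra. }
  destruct (Classical_Prop.classic (exists j, In j (blk n k) /\ Vj n x j = 0%nat)) as [[j0 [Hj0 HV]]|Hno].
  - assert (HR : RR n b0 b1 k x <= (INR k - 1) * b1 + b0).
    { pose proof (sum_good b0 b1 (blk n k) (fun j => rate b0 b1 n x j) j0 Hj0 ltac:(intros; apply rate_bounds; lra)
        ltac:(unfold rate; rewrite HV; lra)) as S. unfold RR. unfold blk in S at 2. rewrite length_seq in S. lra. }
    assert ((exp (th / INR k) - 1) * phi n th k x * RR n b0 b1 k x <= G * phi n th k x).
    { specialize (HG k Hk). assert ((exp (th / INR k) - 1) * RR n b0 b1 k x <= (exp (th / INR k) - 1) * ((INR k - 1) * b1 + b0)) by (apply Rmult_le_compat_l; lra).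
      nra. }
    assert (0 <= D * (if Nat.ltb k n then phi n th (S k) x else 0)) by (apply Rmult_le_pos; lra). lra.
  - assert (Hbad : forall j, In j (blk n k) -> Vj n x j <> 0%nat) by (intros j Hj HV; apply Hno; eauto).
    destruct (bad_case n Hn k x Hk Hbad) as [Hkn Hlt].
    assert (Hm : phi n th k x <= phi n th (S k) x) by (apply phi_mono; auto; lia).
    rewrite (proj2 (Nat.ltb_lt k n) Hkn).
    specialize (HD k Hk).
    assert ((exp (th / INR k) - 1) * RR n b0 b1 k x <= (exp (th / INR k) - 1) * (INR k * b1)) by (apply Rmult_le_compat_l; lra).
    assert ((exp (th / INR k) - 1) * phi n th k x * RR n b0 b1 k x <= D * phi n th k x) by nra.
    assert (0 <= G * phi n th k x) by (apply Rmult_le_pos; lra).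
    assert (D * phi n th k x <= D * phi n th (S k) x) by (apply Rmult_le_compat_l; lra).
    lra.
Qed.
End P2b.

Lemma bound2 b0 b1 n eps : 0 < b0 -> b0 < b1 -> (1 <= n)%nat -> 0 < eps ->
  exists C al, 0 < C /\ 0 < al /\ forall t, 0 <= t ->
    ProbGe_le n b0 b1 t ((((INR n - 1) * b1 + b0) / INR n + eps) * t) (C * exp (- (al * t))).
Proof.
  intros Hb0 Hb Hn He.
  assert (HnR : 1 <= INR n) by (apply (le_INR 1); lia).
  set (v := ((INR n - 1) * b1 + b0) / INR n).
  assert (Hv : 0 < v) by (unfold v; apply Rdiv_lt_0_compat; nra).
  set (th := eps / (4 * v + eps)).
  assert (Hth : 0 < th < 1).
  { unfold th. split. apply Rdiv_lt_0_compat; nra. apply Rmult_lt_reg_r with (4 * v + eps); [nra|].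
    unfold Rdiv. rewrite Rmult_assoc, Rinv_l; nra. }
  assert (Hthv : th * (v + eps / 4) = eps / 4) by (unfold th; field; nra).
  set (G := th * (v + eps / 4)).
  set (D := b1 * (th / (1 - th))).
  assert (HD0 : 0 <= D) by (unfold D; apply Rmult_le_pos; [lra|apply Rdiv_le_0_compat; lra]).
  set (r := D / (th * eps / 4)).
  assert (Hr : 0 <= r) by (unfold r; apply Rdiv_le_0_compat; nra).
  assert (HDr : D = r * (th * eps / 4)) by (unfold r; field; nra).
  assert (HG : forall k, (1 <= k <= n)%nat -> (exp (th / INR k) - 1) * ((INR k - 1) * b1 + b0) <= G).
  { intros k Hk. assert (HkR : 1 <= INR k) by (apply (le_INR 1); lia).
    assert (Hkn : INR k <= INR n) by (apply le_INR; lia).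
    pose proof (exp_sub1_le (th / INR k)) as E.
    assert (Hu : 0 <= th / INR k < 1).
    { split. apply Rdiv_le_0_compat; lra. apply Rmult_lt_reg_r with (INR k); [lra|]. unfold Rdiv. rewrite Rmult_assoc, Rinv_l; lra. }
    specialize (E Hu). replace (th / INR k / (1 - th / INR k)) with (th / (INR k - th)) in E by (field; lra).
    assert (Hkv : (INR k - 1) * b1 + b0 <= INR k * v).
    { unfold v. apply Rmult_le_reg_r with (INR n); [lra|]. unfold Rdiv. rewrite (Rmult_assoc (INR k)), Rmult_assoc, Rinv_l by lra. nra. }
    assert (H0 : 0 <= (INR k - 1) * b1 + b0) by nra.
    apply Rle_trans with (th / (INR k - th) * (INR k * v)).
    { apply Rle_trans with (th / (INR k - th) * ((INR k - 1) * b1 + b0)). apply Rmult_le_compat_r; lra.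
      apply Rmult_le_compat_l; [apply Rdiv_le_0_compat; lra|lra]. }
    unfold G. apply Rmult_le_reg_r with (INR k - th); [lra|].
    replace (th / (INR k - th) * (INR k * v) * (INR k - th)) with (th * (INR k * v)) by (field; lra).
    assert (E2 : th * (v + eps / 4) * (INR k - th) = th * (INR k * v) + th * (eps / 4) * (INR k - 1)).
    { assert (E3 : th * (th * (v + eps / 4)) = th * (eps / 4)) by (rewrite Hthv; reflexivity). nra. }
    rewrite E2. assert (0 <= th * (eps / 4) * (INR k - 1)) by (apply Rmult_le_pos; nra). lra. }
  assert (HDk : forall k, (1 <= k <= n)%nat -> (exp (th / INR k) - 1) * (INR k * b1) <= D).
  { intros k Hk. assert (HkR : 1 <= INR k) by (apply (le_INR 1); lia).
    pose proof (exp_sub1_le (th / INR k)) as E.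
    assert (Hu : 0 <= th / INR k < 1).
    { split. apply Rdiv_le_0_compat; lra. apply Rmult_lt_reg_r with (INR k); [lra|]. unfold Rdiv. rewrite Rmult_assoc, Rinv_l; lra. }
    specialize (E Hu). replace (th / INR k / (1 - th / INR k)) with (th / (INR k - th)) in E by (field; lra).
    apply Rle_trans with (th / (INR k - th) * (INR k * b1)). apply Rmult_le_compat_r; nra.
    unfold D. replace (th / (INR k - th) * (INR k * b1)) with (b1 * (th * INR k / (INR k - th))) by (field; lra).
    apply Rmult_le_compat_l; [lra|]. apply Rmult_le_reg_r with ((INR k - th) * (1 - th)); [nra|].
    replace (th * INR k / (INR k - th) * ((INR k - th) * (1 - th))) with (th * INR k * (1 - th)) by (field; lra).
    replace (th / (1 - th) * ((INR k - th) * (1 - th))) with (th * (INR k - th)) by (field; lra). nra. }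
  assert (HG0 : 0 <= G) by (unfold G; nra).
  set (Phi := fun x => sumR (seq 1 n) (fun k => r ^ (k - 1) * phi n th k x)).
  set (c := th * (v + eps / 2)).
  assert (Hphi0 : forall k x, 0 <= r ^ (k - 1) * phi n th k x) by (intros; apply Rmult_le_pos; [apply pow_le; auto|left; apply exp_pos]).
  set (C2 := Phi zero_conf).
  assert (HC2 : C2 = sumR (seq 1 n) (fun k => r ^ (k - 1))).
  { unfold C2, Phi. apply sumR_ext. intros k _. unfold phi, UU. rewrite (sumR_ext _ _ (fun _ => 0)) by (intros; reflexivity).
    rewrite sumR_const, !Rmult_0_r, exp_0. ring. }
  assert (HC2p : 1 <= C2).
  { rewrite HC2. destruct n as [|m]; [lia|]. simpl seq. rewrite sumR_cons. simpl pow.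
    assert (0 <= sumR (seq 2 m) (fun k => r ^ (k - 1))) by (apply sumR_nonneg; intros; apply pow_le; auto). lra. }
  exists C2, (th * eps / 2). split; [lra|]. split; [nra|]. intros t Ht.
  destruct (chernoff b0 b1 n Phi th c Hn Hb0 (Rlt_le _ _ Hb) ltac:(lra) ltac:(unfold c; nra)) with (t := t) (a := (v + eps) * t) as [p [Hp1 Hp2]]; auto.
  - intros x. apply sumR_nonneg; intros; auto.
  - intros x. unfold Phi. eapply Rle_trans; [|apply (sumR_term _ _ 1%nat); [apply in_seq; lia| intros; auto]].
    cbv beta. simpl pow. rewrite Rmult_1_l. unfold phi, UU, blk. replace (n - 1 + 1)%nat with n by lia. simpl seq. rewrite sumR_cons, sumR_nil.
    simpl INR. right. f_equal. field.
  - intros x. unfold Phi. rewrite Gen_sum.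
    apply Rle_trans with (sumR (seq 1 n) (fun k => r ^ (k - 1) * (G * phi n th k x + D * (if Nat.ltb k n then phi n th (S k) x else 0)))).
    { apply sumR_le. intros k Hk. apply in_seq in Hk. apply Rmult_le_compat_l; [apply pow_le; auto|].
      apply Gen_phi_bound; auto; lia. }
    rewrite (sumR_ext _ _ (fun k => G * (r ^ (k - 1) * phi n th k x) + D * (r ^ (k - 1) * (if Nat.ltb k n then phi n th (S k) x else 0)))) by (intros; ring).
    rewrite sumR_lin.
    assert (Hpsi : D * sumR (seq 1 n) (fun k => r ^ (k - 1) * (if Nat.ltb k n then phi n th (S k) x else 0)) <= th * eps / 4 * Phi x).
    { destruct n as [|m]; [lia|].
      replace (S m) with (m + 1)%nat at 1 by lia. rewrite seq_app, sumR_app. simpl seq at 2. rewrite sumR_cons, sumR_nil.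
      replace (1 + m)%nat with (S m) by lia. rewrite Nat.ltb_irrefl, Rmult_0_r, !Rplus_0_r.
      rewrite (sumR_ext (seq 1 m) _ (fun k => r ^ (k - 1) * phi (S m) th (S k) x)).
      2: { intros k Hk. apply in_seq in Hk. rewrite (proj2 (Nat.ltb_lt k (S m))) by lia. reflexivity. }
      rewrite HDr, <- sumR_scal.
      rewrite (sumR_ext (seq 1 m) _ (fun k => th * eps / 4 * (r ^ (S k - 1) * phi (S m) th (S k) x))).
      2: { intros k Hk. apply in_seq in Hk. replace (S k - 1)%nat with (S (k - 1)) by lia. simpl pow. ring. }
      rewrite <- (sumR_map (seq 1 m) S (fun k => th * eps / 4 * (r ^ (k - 1) * phi (S m) th k x))), seq_shift.
      unfold Phi. rewrite <- sumR_scal. simpl seq. rewrite sumR_cons.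
      assert (0 <= th * eps / 4 * (r ^ (1 - 1) * phi (S m) th 1 x)) by (apply Rmult_le_pos; [nra|auto]). lra. }
    unfold c. fold (Phi x). replace (th * (v + eps / 2) * Phi x) with (G * Phi x + th * eps / 4 * Phi x) by (assert (EG : G = th * (v + eps / 4)) by reflexivity; rewrite EG; field).
    lra.
  - exists p. split; auto. eapply Rle_trans; [exact Hp2|]. fold C2.
    apply Rmult_le_compat_l; [lra|]. apply exp_le_mono. unfold c. nra.
Qed.

Lemma ProbGe_le_mono m b0 b1 t a B B' : B <= B' -> ProbGe_le m b0 b1 t a B -> ProbGe_le m b0 b1 t a B'.
Proof. intros H [p [Hp1 Hp2]]. exists p; split; auto; lra. Qed.

Lemma exp_bound_mono C C' al al' t : 0 <= t -> 0 <= C <= C' -> al' <= al -> C * exp (- (al * t)) <= C' * exp (- (al' * t)).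
Proof. intros Ht HC Hal. apply Rmult_le_compat; try lra. left; apply exp_pos. apply exp_le_mono. nra. Qed.

Theorem mainTheorem9 (b0 b1 : R) (n : nat) (eps : R) :
  0 < b0 -> b0 < b1 -> (2 <= n)%nat -> 0 < eps ->
  exists C alpha : R, 0 < C /\ 0 < alpha /\
    forall t : R, 0 <= t ->
      ProbGe_le n b0 b1 t ((INR n * b0 + eps) * t) (C * exp (- (alpha * t))) /\
      ProbGe_le n b0 b1 t ((((INR n - 1) * b1 + b0) / INR n + eps) * t)
        (C * exp (- (alpha * t))) /\
      ProbGe_le n b0 b1 t ((4 * sqrt 2 * sqrt (b1 * b0) + eps) * t)
        (C * exp (- (alpha * t))).
Proof.
  intros Hb0 Hb Hn He.
  assert (Hn1 : (1 <= n)%nat) by lia.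
  assert (HnR : 0 <= INR n) by apply pos_INR.
  destruct (bound1 b0 b1 n eps Hb0 Hb Hn1 He) as [a1 [Ha1 H1]].
  destruct (bound2 b0 b1 n eps Hb0 Hb Hn1 He) as [C2 [a2 [HC2 [Ha2 H2]]]].
  set (al := Rmin a1 (Rmin a2 eps)).
  assert (Hal1 : al <= a1) by apply Rmin_l.
  assert (Hal2 : al <= a2) by (eapply Rle_trans; [apply Rmin_r|apply Rmin_l]).
  assert (Hal3 : al <= eps) by (eapply Rle_trans; [apply Rmin_r|apply Rmin_r]).
  assert (Hal : 0 < al) by (unfold al; repeat apply Rmin_glb_lt; auto).
  exists (1 + C2 + INR n), al. split; [lra|]. split; auto. intros t Ht.
  split; [|split].
  - eapply ProbGe_le_mono; [|apply H1; auto]. apply exp_bound_mono; auto; lra.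
  - eapply ProbGe_le_mono; [|apply H2; auto]. apply exp_bound_mono; auto; lra.
  - eapply ProbGe_le_mono; [|apply bound3; auto]. apply exp_bound_mono; auto; lra.
Qed.
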